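(* In the Majority Model (MM) on the cycle $C_n=(v_0,\dots,v_{n-1})$, the number of stable colorings is $\Theta(\Phi^n)$, where $\Phi=\frac{1+\sqrt5}{2}$ is the golden ratio.
   Context: A coloring is a map from the nodes to $\{b,w\}$. In MM, all nodes update simultaneously: a node adopts the color strictly more frequent among its neighbors in the previous round and keeps its color in case of a tie. A coloring is stable if one application of the MM update rule returns the same coloring. *)

(* Defs.v *)
From HB Require Import structures.
From mathcomp Require Import all_boot all_order all_algebra.
Set Implicit Arguments. Unset Strict Implicit. Unset Printing Implicit Defensive.
Import Order.TTheory GRing.Theory Num.Theory.

Definition color := bool.
Definition col_b : color := true.
Definition col_w : color := false.

Definition coloring (T : finType) := {ffun T -> color}.

Definition MM_step (T : finType) (adj : rel T) (c : coloring T) : coloring T :=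
  [ffun v =>
     let nb := #|[pred u | adj v u && (c u == col_b)]| in
     let nw := #|[pred u | adj v u && (c u == col_w)]| in
     if nw < nb then col_b else if nb < nw then col_w else c v].

Definition MM_stable (T : finType) (adj : rel T) (c : coloring T) : bool :=
  MM_step adj c == c.

Definition cycle_adj (n : nat) : rel 'I_n :=
  fun i j => (val j == (val i).+1 %% n) || (val i == (val j).+1 %% n).

Definition num_stable_cycle (n : nat) : nat :=
  #|[set c : coloring 'I_n | MM_stable (@cycle_adj n) c]|.

Definition golden (R : rcfType) : R := (1 + Num.sqrt 5) / 2.

(* Main.v *)
Require Import Defs.
From HB Require Import structures.
From mathcomp Require Import all_boot all_order all_algebra.
From mathcomp Require Import ring lra.
Import Order.TTheory GRing.Theory Num.Theory.
Set Implicit Arguments. Unset Strict Implicit. Unset Printing Implicit Defensive.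

Definition ok3 (a b c : bool) : bool := ~~ ((a == c) && (a != b)).
Fixpoint noiso (s : seq bool) : bool :=
  match s with
  | a :: ((b :: c :: _) as t) => ok3 a b c && noiso t
  | _ => true
  end.
Fixpoint allseq (n : nat) : seq (seq bool) :=
  if n is n'.+1 then map (cons true) (allseq n') ++ map (cons false) (allseq n')
  else [:: [::]].
Fixpoint fib (n : nat) : nat :=
  match n with 0 => 0 | 1 => 1 | (m.+1 as k).+1 => fib k + fib m end.

Lemma consI (x : bool) : injective (cons x).
Proof. by move=> a b []. Qed.

Lemma allseqP n s : (s \in allseq n) = (size s == n).
Proof.
elim: n s => [|n IH] s; first by case: s.
case: s => [|x s] /=.
  rewrite mem_cat; apply/negbTE; rewrite negb_or; apply/andP; split;
  apply/mapP => -[? _ //].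
rewrite mem_cat eqSS; case: x.
- rewrite (mem_map (@consI true)) IH; apply/orP/idP => [[]//|]; first by move=> /mapP[? _].
  by left.
- rewrite (mem_map (@consI false)) IH; apply/orP/idP => [[]//|]; last by right.
  by move=> /mapP[? _].
Qed.

Lemma allseq_uniq n : uniq (allseq n).
Proof.
elim: n => [|n IH] //=; rewrite cat_uniq !map_inj_uniq ?IH //=; try exact: consI.
rewrite andbT; apply/hasPn => s /mapP[t _ ->]; apply/mapP => -[? _ //].
Qed.

Definition A k x y := count (fun s => noiso [:: x, y & s]) (allseq k).

Lemma AE k x y : A k x y = if x == y then fib k.+2 else fib k.+1.
Proof.
elim: k x y => [|k IH] x y; first by case: x; case: y.
rewrite /A /= count_cat !count_map.
have E z : count (preim (cons z) (fun s => noiso [:: x, y & s])) (allseq k)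
   = if ok3 x y z then A k y z else 0.
  rewrite /A; case: ifP => h.
    by apply: eq_count => s; rewrite /preim /= h.
  rewrite -(count_pred0 (allseq k)); apply: eq_count => s.
  by rewrite /preim /= h.
rewrite !E !IH; move: E; case: x; case: y => //= _; rewrite ?addn0. all: try by rewrite addnC.
Qed.

Lemma noisoP s : reflect (forall k, k.+2 < size s ->
   ok3 (nth false s k) (nth false s k.+1) (nth false s k.+2)) (noiso s).
Proof.
elim: s => [|a t IH]; first by constructor.
case: t IH => [|b [|c u]] IH.
- by constructor.
- by constructor => -[|[|k]].
have -> : noiso [:: a, b, c & u] = ok3 a b c && noiso [:: b, c & u] by [].
apply: (iffP andP).
- case=> h1 /IH h2 [|k] //= hk; exact: h2.
- move=> h; split; first exact: (h 0).
  by apply/IH => k hk; apply: (h k.+1).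
Qed.

Lemma ok3_bb a b : ok3 a b b.
Proof. by case: a; case: b. Qed.
Lemma ok3_aa a b : ok3 a a b.
Proof. by case: a; case: b. Qed.

Lemma noiso_rcons s : noiso s -> noiso (rcons s (nth false s (size s).-1)).
Proof.
move=> /noisoP h; apply/noisoP => k; rewrite size_rcons ltnS => hk.
rewrite !nth_rcons.
have [hlt|hge] := ltnP k.+2 (size s).
  rewrite (ltnW hlt) (ltnW (ltnW hlt)); exact: h.
have e : k.+2 = size s by apply/eqP; rewrite eqn_leq hk.
have e1 : k.+1 < size s by rewrite -e.
have e0 : k < size s by rewrite -e ltnW.
rewrite e1 e0 -e eqxx /=.
exact: ok3_bb.
Qed.

Lemma ordS_val n (v : 'I_n) : val (ordS v) = if v.+1 == n then 0 else v.+1.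
Proof.
rewrite /=; case: eqP => [->|ne]; first by rewrite modnn.
rewrite modn_small //; have := ltn_ord v; rewrite leq_eqVlt => /orP[/eqP//|//].
Qed.

Lemma ord_pred_val n (v : 'I_n) :
  val (ord_pred v) = if val v == 0 then n.-1 else (val v).-1.
Proof.
rewrite /=; case: v => [[|w] hw] /=.
  by rewrite modn_small // prednK // (leq_ltn_trans _ hw).
by rewrite modnDr modn_small // ltnW.
Qed.

Lemma adjE n (v u : 'I_n) :
  cycle_adj v u = (u == ordS v) || (u == ord_pred v).
Proof.
rewrite /cycle_adj; congr (_ || _).
rewrite -[val v == _]/(v == ordS u) -(inj_eq (@ord_pred_inj n)) ordSK.
by rewrite eq_sym.
Qed.

Lemma ordS_pred_neq m (v : 'I_m.+3) : ordS v != ord_pred v.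
Proof.
apply/eqP => h; have := congr1 val h; rewrite ordS_val ord_pred_val.
case: v h => [[|w] hw] /= _.
  by move/eqP.
case: eqP => [e|_]; first by move=> e2; rewrite -e2 in e.
move=> e; have : w < w.+2 := leqW (ltnSn w).
by rewrite e ltnn.
Qed.

Lemma card2P (T : finType) (a b : T) (P : pred T) : a != b ->
  #|[pred u | ((u == a) || (u == b)) && P u]| = P a + P b.
Proof.
move=> nab; rewrite (cardD1 a) (cardD1 b) !inE !eqxx /= orbT eq_sym nab /=.
rewrite (eq_card0 (A := _)) ?addn0 //.
move=> u; rewrite !inE; case: (u =P b) => //= _; case: (u =P a) => //=.
Qed.

Lemma step_at m (c : coloring 'I_m.+3) v :
  MM_step (@cycle_adj _) c v =
  if c (ordS v) == c (ord_pred v) then c (ordS v) else c v.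
Proof.
have H x : #|[pred u | cycle_adj v u && (c u == x)]| =
   (c (ordS v) == x) + (c (ord_pred v) == x).
  rewrite -(card2P (fun u => c u == x) (ordS_pred_neq v)).
  by apply: eq_card => u; rewrite !inE adjE.
rewrite ffunE /= !H /col_b /col_w.
by case: (c (ordS v)); case: (c (ord_pred v)); case: (c v).
Qed.

Lemma stableP m (c : coloring 'I_m.+3) :
  reflect (forall v, ok3 (c (ordS v)) (c v) (c (ord_pred v)))
          (MM_stable (@cycle_adj _) c).
Proof.
apply: (iffP eqP) => [h v|h].
  have := congr1 (fun f : coloring _ => f v) h; rewrite /= step_at.
  by rewrite /ok3; case: (c (ordS v)); case: (c (ord_pred v)); case: (c v).
apply/ffunP => v; rewrite step_at; move: (h v).
by rewrite /ok3; case: (c (ordS v)); case: (c (ord_pred v)); case: (c v).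
Qed.

Lemma ok3C a b c : ok3 a b c = ok3 c b a.
Proof. by case: a; case: b; case: c. Qed.

Definition f_of m (c : coloring 'I_m.+3) : seq bool := mkseq (fun k => c (inord k)) m.+3.

Lemma f_inj m : injective (@f_of m).
Proof.
move=> c1 c2 e; apply/ffunP => i.
have := congr1 (fun s => nth false s i) e; rewrite /f_of !nth_mkseq //.
by rewrite inord_val.
Qed.

Lemma f_noiso m (c : coloring 'I_m.+3) : MM_stable (@cycle_adj _) c -> noiso (f_of c).
Proof.
move/stableP => h; apply/noisoP => k; rewrite size_mkseq => hk.
rewrite /f_of !nth_mkseq // ?(ltnW hk) ?(ltnW (ltnW hk)) //.
have := h (inord k.+1).
have -> : ordS (inord k.+1 : 'I_m.+3) = inord k.+2.
  by apply: val_inj; rewrite ordS_val /= !inordK ?(ltn_eqF hk) // ltnW.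
have -> : ord_pred (inord k.+1 : 'I_m.+3) = inord k.
  by apply: val_inj; rewrite ord_pred_val /= !inordK // ?(ltnW hk) ?(ltnW (ltnW hk)).
by rewrite ok3C.
Qed.

Definition g_of m (s : seq bool) : coloring 'I_m.+3 := [ffun i : 'I_m.+3 => nth false s i].

Lemma g_stable m s : size s = m.+3 -> noiso s ->
  nth false s 0 = nth false s 1 -> nth false s m.+1 = nth false s m.+2 ->
  MM_stable (@cycle_adj _) (g_of m s).
Proof.
move=> hs /noisoP hn e0 e1; apply/stableP => v; rewrite !ffunE.
rewrite ordS_val ord_pred_val.
case: v => [[|w] hw] /=.
  by rewrite -e0 ok3_aa.
case: eqP => [e|ne].
  by case: e => ->; rewrite e1 ok3_bb.
rewrite ok3C; apply: hn; rewrite hs.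
by rewrite ltn_neqAle hw andbT; apply/eqP.
Qed.

Lemma count_allseq2 k (P : pred (seq bool)) :
  count P (allseq k.+2) =
  count (fun s => P [:: true, true & s]) (allseq k) +
  count (fun s => P [:: true, false & s]) (allseq k) +
  (count (fun s => P [:: false, true & s]) (allseq k) +
  count (fun s => P [:: false, false & s]) (allseq k)).
Proof. rewrite [allseq k.+2]/= !count_cat !count_map !count_cat !count_map.
by congr (_ + _ + (_ + _)); apply: eq_count.
Qed.

Lemma upper m : num_stable_cycle m.+3 <= 2 * fib m.+4.
Proof.
rewrite /num_stable_cycle cardE.
apply: (@leq_trans (size (filter noiso (allseq m.+3)))).
  rewrite -(size_map (@f_of m)); apply: uniq_leq_size.
    rewrite map_inj_uniq ?enum_uniq //; exact: f_inj.
  move=> s /mapP[c]; rewrite mem_enum inE => hc ->.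
  rewrite mem_filter allseqP size_mkseq eqxx andbT; exact: f_noiso.
rewrite size_filter count_allseq2.
have := AE m.+1; rewrite /A => H.
rewrite !H.
have -> : fib m.+4 = fib m.+3 + fib m.+2 by [].
set a := fib m.+3; set b := fib m.+2; rewrite /=.
by rewrite mul2n -addnn [b + a]addnC.
Qed.

Lemma lower m : fib m.+2 <= num_stable_cycle m.+3.
Proof.
have := AE m true true; rewrite /A /= => <-.
rewrite -size_filter /num_stable_cycle cardE.
set hw := fun w : seq bool => rcons [:: true, true & w] (nth false [:: true, true & w] (size w).+1).
rewrite -(size_map (fun w => g_of m (hw w))).
apply: uniq_leq_size.
  rewrite map_inj_in_uniq ?filter_uniq ?allseq_uniq //.
  move=> w1 w2; rewrite !mem_filter !allseqP => /andP[_ /eqP s1] /andP[_ /eqP s2] e.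
  have : hw w1 = hw w2.
    apply: (@eq_from_nth _ false); first by rewrite !size_rcons /= s1 s2.
    move=> i; rewrite size_rcons /= s1 => hi.
    have := congr1 (fun f : coloring _ => f (inord i)) e.
    by rewrite !ffunE inordK.
  by move/rcons_inj => [].
move=> c /mapP[w]; rewrite mem_filter allseqP => /andP[hn /eqP hs] ->.
rewrite mem_enum inE; apply: g_stable.
- by rewrite size_rcons /= hs.
- exact: (@noiso_rcons [:: true, true & w] hn).
- by rewrite /hw !nth_rcons /=.
- by rewrite /hw !nth_rcons /= hs ltnSn ltnn eqxx.
Qed.

Local Open Scope ring_scope.

Lemma golden_facts (R : rcfType) :
  0 < golden R /\ golden R ^+ 2 = golden R + 1 /\ 1 <= golden R /\ golden R <= 2.
Proof.
have hs : Num.sqrt (5 : R) ^+ 2 = 5 by rewrite sqr_sqrtr // ler0n.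
have hs0 : 0 <= Num.sqrt (5 : R) by exact: sqrtr_ge0.
rewrite /golden; set s := Num.sqrt 5 in hs hs0 *.
have hs1 : 1 <= s by nra.
have hs3 : s <= 3 by nra.
split; first by lra.
split; first by rewrite expr2; nra.
split; lra.
Qed.

Lemma fib_bounds (R : rcfType) (j : nat) :
  golden R ^+ j <= (fib j.+2)%:R /\ (fib j.+2)%:R <= golden R ^+ j.+1.
Proof.
have [g0 [g2 [g1 g3]]] := golden_facts R.
set g := golden R in g0 g1 g2 g3 *.
suff H : forall j, (g ^+ j <= (fib j.+2)%:R /\ (fib j.+2)%:R <= g ^+ j.+1) /\
   (g ^+ j.+1 <= (fib j.+3)%:R /\ (fib j.+3)%:R <= g ^+ j.+2) by case: (H j).
elim=> [|k [[l1 u1] [l2 u2]]].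
  rewrite !expr0 !expr1 /=; split; split => //; first by lra.

split; first by split.
have -> : fib k.+4 = (fib k.+3 + fib k.+2)%N by [].
rewrite natrD.
have e1 : g ^+ k.+2 = g ^+ k.+1 + g ^+ k by rewrite -addn2 exprD g2 mulrDr mulr1 exprS mulrC.
have e2 : g ^+ k.+3 = g ^+ k.+2 + g ^+ k.+1.
  have -> : (k.+3 = k.+1 + 2)%N by rewrite addn2.
  by rewrite exprD g2 mulrDr mulr1 -exprSr.
rewrite e1 e2; split; lra.
Qed.

Theorem theorem2p8 (R : rcfType) :
  exists (c1 c2 : R) (N : nat),
    0 < c1 /\ 0 < c2 /\
    forall n : nat, (N <= n)%N ->
      c1 * golden R ^+ n <= (num_stable_cycle n)%:R /\
      (num_stable_cycle n)%:R <= c2 * golden R ^+ n.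
Proof.
have [g0 _] := golden_facts R.
exists (golden R ^+ 3)^-1, 2, 3%N; split; first by rewrite invr_gt0 exprn_gt0.
split; first by [].
case=> [|[|[|m]]] // _; split.
- have -> : (golden R ^+ 3)^-1 * golden R ^+ m.+3 = golden R ^+ m.
    have -> : (m.+3 = 3 + m)%N by rewrite add3n.
    rewrite exprD mulKr //.
    by rewrite unitfE expf_neq0 // gt_eqF.
  apply: le_trans (proj1 (fib_bounds R m)) _.
  by rewrite ler_nat lower.
- apply: (@le_trans _ _ ((2 * fib m.+4)%N)%:R); first by rewrite ler_nat upper.
  rewrite natrM; apply: ler_wpM2l => //.
  exact: (proj2 (fib_bounds R m.+2)).
Qed.
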